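(* Assume the setting in the context, and in addition $\phi_\alpha=\phi_\beta$. Suppose $A:=\phi_\alpha-\gamma\phi'_\alpha$ and $B:=\phi_\beta-\gamma\phi'_\beta$ have opposite signs, so that both $\theta_{\pi_1}$ and $\theta_{\pi_2}$ exist and are distinct, and let $\Omega=\{\lambda\theta_{\pi_1}+(1-\lambda)\theta_{\pi_2}:\lambda\in(0,1)\}$ be the open segment between them. Write $d=\theta_{\pi_1}-\theta_{\pi_2}$ and, for nonzero $x,y\in\mathbb{R}^2$, $\cos(x,y)=\langle x,y\rangle/(\|x\|\|y\|)$. (1) If $A>0$ and $B<0$, then $\cos\big(d,F^{\pi_2}_{\mathrm{semi}}(\theta)\big)=1$ for every $\theta\in\Omega$ with $\theta_2\ge\theta_1$, and $\cos\big(d,F^{\pi_1}_{\mathrm{semi}}(\theta)\big)=1$ for every $\theta\in\Omega$ with $\theta_2\le\theta_1$. (2) If $A<0$ and $B>0$, then $\cos\big(d,F^{\pi_2}_{\mathrm{semi}}(\theta)\big)=-1$ for every $\theta\in\Omega$ with $\theta_2\ge\theta_1$, and $\cos\big(d,F^{\pi_1}_{\mathrm{semi}}(\theta)\big)=-1$ for every $\theta\in\Omega$ with $\theta_2\le\theta_1$. (In particular the relevant semi-gradient fields are nonzero on these sets, and along the segment they point toward $\theta_{\pi_1}$ in case (1) and toward $\theta_{\pi_2}$ in case (2).)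
   Context: Let $\gamma\in(0,1)$, $C<0$, $\phi_\alpha,\phi_\beta>0$, $\phi'_\alpha,\phi'_\beta\ge0$ with $\phi_\alpha-\gamma\phi'_\alpha\ne0$ and $\phi_\beta-\gamma\phi'_\beta\ne0$. These are the scalar embeddings $\phi(s_\alpha),\phi(s_\beta),\phi(s'_\alpha),\phi(s'_\beta)$ of the states in a two-sample dataset $\{(s_\alpha,a_1,s'_\alpha,C),(s_\beta,a_2,s'_\beta,C)\}$ from an MDP with actions $\{a_1,a_2\}$ and discount $\gamma$, with linear parameterization $Q(s,a)=\phi(s)\theta(a)$, $\theta=(\theta_1,\theta_2)=(\theta(a_1),\theta(a_2))\in\mathbb{R}^2$. Policy $\pi_1$ corresponds to the region $\theta_1\ge\theta_2$ and $\pi_2$ to $\theta_1\le\theta_2$. Negative semi-gradients: $F^{\pi_1}_{\mathrm{semi}}(\theta)=\big(-\phi_\alpha(\phi_\alpha\theta_1-C-\gamma\phi'_\alpha\theta_1),\ -\phi_\beta(\phi_\beta\theta_2-C-\gamma\phi'_\beta\theta_1)\big)$, $F^{\pi_2}_{\mathrm{semi}}(\theta)=\big(-\phi_\alpha(\phi_\alpha\theta_1-C-\gamma\phi'_\alpha\theta_2),\ -\phi_\beta(\phi_\beta\theta_2-C-\gamma\phi'_\beta\theta_2)\big)$. Solutions of the Bellman equations: with $A=\phi_\alpha-\gamma\phi'_\alpha$, $B=\phi_\beta-\gamma\phi'_\beta$, $\theta_{\pi_1}=\Big(\frac{C}{A},\ \frac{C}{\phi_\beta}+\frac{C\gamma\phi'_\beta}{\phi_\beta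 A}\Big)$ (the zero of $F^{\pi_1}_{\mathrm{semi}}$, lying in $\{\theta_1\ge\theta_2\}$ iff $B/A\le1$) and $\theta_{\pi_2}=\Big(\frac{C}{\phi_\alpha}+\frac{C\gamma\phi'_\alpha}{\phi_\alpha B},\ \frac{C}{B}\Big)$ (the zero of $F^{\pi_2}_{\mathrm{semi}}$, lying in $\{\theta_1\le\theta_2\}$ iff $A/B\le1$). *)

(* Defs.v *)
From Stdlib Require Import Reals.
Open Scope R_scope.

(* theta = (theta_1, theta_2) = (theta(a1), theta(a2)) *)

Definition inner2 (x y : R * R) : R := fst x * fst y + snd x * snd y.
Definition norm2 (x : R * R) : R := sqrt (inner2 x x).
Definition cos_vec (x y : R * R) : R := inner2 x y / (norm2 x * norm2 y).

Definition vsub (x y : R * R) : R * R := (fst x - fst y, snd x - snd y).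
Definition vcomb (l : R) (x y : R * R) : R * R :=
  (l * fst x + (1 - l) * fst y, l * snd x + (1 - l) * snd y).

(* Negative semi-gradients. pa = phi(s_alpha), pb = phi(s_beta),
   pa' = phi(s'_alpha), pb' = phi(s'_beta). *)
Definition F_semi_pi1 (g C pa pb pa' pb' : R) (th : R * R) : R * R :=
  (- pa * (pa * fst th - C - g * pa' * fst th),
   - pb * (pb * snd th - C - g * pb' * fst th)).
Definition F_semi_pi2 (g C pa pb pa' pb' : R) (th : R * R) : R * R :=
  (- pa * (pa * fst th - C - g * pa' * snd th),
   - pb * (pb * snd th - C - g * pb' * snd th)).

(* Bellman solutions, with A = pa - g pa', B = pb - g pb'. *)
Definition theta_pi1 (g C pa pb pa' pb' : R) : R * R :=
  (C / (pa - g * pa'), C / pb + C * g * pb' / (pb * (pa - g * pa'))).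
Definition theta_pi2 (g C pa pb pa' pb' : R) : R * R :=
  (C / pa + C * g * pa' / (pa * (pb - g * pb')), C / (pb - g * pb')).

Definition in_Omega (g C pa pb pa' pb' : R) (th : R * R) : Prop :=
  exists l, 0 < l < 1 /\
    th = vcomb l (theta_pi1 g C pa pb pa' pb') (theta_pi2 g C pa pb pa' pb').

(* Main.v *)
Require Import Defs.
From Stdlib Require Import Reals Lra.
Open Scope R_scope.

Lemma cos_scal (d : R * R) c : inner2 d d > 0 -> c <> 0 ->
  cos_vec d (c * fst d, c * snd d) = c / Rabs c.
Proof.
  intros Hd Hc. unfold cos_vec, norm2.
  replace (inner2 d (c * fst d, c * snd d)) with (c * inner2 d d)
    by (unfold inner2; simpl; ring).
  replace (inner2 (c * fst d, c * snd d) (c * fst d, c * snd d))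
    with (Rsqr c * inner2 d d) by (unfold inner2, Rsqr; simpl; ring).
  rewrite sqrt_mult by (try apply Rle_0_sqr; lra).
  rewrite sqrt_Rsqr_abs.
  assert (Hs : 0 < sqrt (inner2 d d)) by (apply sqrt_lt_R0; lra).
  assert (Ha : 0 < Rabs c) by (apply Rabs_pos_lt; auto).
  replace (c * inner2 d d) with (c * (sqrt (inner2 d d) * sqrt (inner2 d d)))
    by (rewrite sqrt_sqrt; lra).
  field. lra.
Qed.

Lemma cpos c : 0 < c -> c / Rabs c = 1.
Proof. intros; rewrite Rabs_right by lra; field; lra. Qed.
Lemma cneg c : c < 0 -> c / Rabs c = -1.
Proof. intros; rewrite Rabs_left by lra; field; lra. Qed.

Theorem theorem1 (g C pa pb pa' pb' : R) :
  0 < g < 1 -> C < 0 -> 0 < pa -> 0 < pb -> 0 <= pa' -> 0 <= pb' ->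
  pa - g * pa' <> 0 -> pb - g * pb' <> 0 ->
  pa = pb ->
  (pa - g * pa') * (pb - g * pb') < 0 ->
  let d := vsub (theta_pi1 g C pa pb pa' pb') (theta_pi2 g C pa pb pa' pb') in
  (0 < pa - g * pa' -> pb - g * pb' < 0 ->
     (forall th, in_Omega g C pa pb pa' pb' th -> fst th <= snd th ->
        cos_vec d (F_semi_pi2 g C pa pb pa' pb' th) = 1) /\
     (forall th, in_Omega g C pa pb pa' pb' th -> snd th <= fst th ->
        cos_vec d (F_semi_pi1 g C pa pb pa' pb' th) = 1)) /\
  (pa - g * pa' < 0 -> 0 < pb - g * pb' ->
     (forall th, in_Omega g C pa pb pa' pb' th -> fst th <= snd th ->
        cos_vec d (F_semi_pi2 g C pa pb pa' pb' th) = -1) /\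
     (forall th, in_Omega g C pa pb pa' pb' th -> snd th <= fst th ->
        cos_vec d (F_semi_pi1 g C pa pb pa' pb' th) = -1)).
Proof.
  intros Hg HC Hpa Hpb Ha' Hb' HA HB Heq Hprod d.
  subst pb.
  set (A := pa - g * pa') in *. set (B := pa - g * pb') in *.
  set (k := C * (B - A) / (pa * A * B)).
  assert (HBA : B - A <> 0) by (intro; nra).
  assert (Hk : k <> 0).
  { unfold k. intro H. unfold Rdiv in H. apply Rmult_integral in H as [H|H].
    - apply Rmult_integral in H as [H|H]; lra.
    - apply Rinv_neq_0_compat in H; auto. intro H0.
      apply Rmult_integral in H0 as [H0|H0]; [apply Rmult_integral in H0 as [H0|H0]|]; lra. }
  assert (Hd1 : fst d = k * (g * pa')).
  { unfold d, vsub, theta_pi1, theta_pi2, k; simpl. fold A B.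
    unfold A, B in *. field. repeat split; lra. }
  assert (Hd2 : snd d = k * (g * pb')).
  { unfold d, vsub, theta_pi1, theta_pi2, k; simpl. fold A B.
    unfold A, B in *. field. repeat split; lra. }
  assert (Hdd : inner2 d d > 0).
  { unfold inner2. rewrite Hd1, Hd2.
    assert (pa' * pa' + pb' * pb' > 0).
    { destruct (Req_dec pa' 0); destruct (Req_dec pb' 0); try nra.
      subst. unfold A, B in Hprod. nra. }
    assert (k * k > 0) by nra. assert (g * g > 0) by nra.
    replace (k * (g * pa') * (k * (g * pa')) + k * (g * pb') * (k * (g * pb')))
      with ((k*k) * (g*g) * (pa' * pa' + pb' * pb')) by ring.
    apply Rmult_gt_0_compat; [apply Rmult_gt_0_compat|]; lra. }
  assert (F2 : forall th, in_Omega g C pa pa pa' pb' th ->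
     exists l, 0 < l < 1 /\
     F_semi_pi2 g C pa pa pa' pb' th = ((l * (- pa * B)) * fst d, (l * (- pa * B)) * snd d)).
  { intros th [l [Hl Hth]]. exists l. split; auto. rewrite Hd1, Hd2. subst th.
    unfold F_semi_pi2, vcomb, theta_pi1, theta_pi2, k; simpl.
    unfold A, B in *. f_equal; field; repeat split; lra. }
  assert (F1 : forall th, in_Omega g C pa pa pa' pb' th ->
     exists l, 0 < l < 1 /\
     F_semi_pi1 g C pa pa pa' pb' th = (((1 - l) * (pa * A)) * fst d, ((1 - l) * (pa * A)) * snd d)).
  { intros th [l [Hl Hth]]. exists l. split; auto. rewrite Hd1, Hd2. subst th.
    unfold F_semi_pi1, vcomb, theta_pi1, theta_pi2, k; simpl.
    unfold A, B in *. f_equal; field; repeat split; lra. }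
  split; intros HA1 HB1; split; intros th Hth _.
  - destruct (F2 th Hth) as [l [Hl ->]]. rewrite cos_scal; [|auto|apply Rmult_integral_contrapositive_currified; [lra|]; apply Rmult_integral_contrapositive_currified; lra]. apply cpos; apply Rmult_lt_0_compat; [lra|]; nra.
  - destruct (F1 th Hth) as [l [Hl ->]]. rewrite cos_scal; [|auto|apply Rmult_integral_contrapositive_currified; [lra|]; apply Rmult_integral_contrapositive_currified; lra]. apply cpos; apply Rmult_lt_0_compat; [lra|]; nra.
  - destruct (F2 th Hth) as [l [Hl ->]]. rewrite cos_scal; [|auto|apply Rmult_integral_contrapositive_currified; [lra|]; apply Rmult_integral_contrapositive_currified; lra]. apply cneg.
    assert (0 < pa * B) by nra. nra.
  - destruct (F1 th Hth) as [l [Hl ->]]. rewrite cos_scal; [|auto|apply Rmult_integral_contrapositive_currified; [lra|]; apply Rmult_integral_contrapositive_currified; lra]. apply cneg.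
    assert (pa * A < 0) by nra. assert (0 < 1 - l) by lra. nra.
Qed.
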